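(* If Algorithm GP (described below), run on a graph $G$, returns a pair $(X,\mathcal{B})$, then $(X,\mathcal{B})$ is a good partition of $G$ (regardless of which admissible vertices are chosen in step (c)).
   Context: Definitions. Partitions are into nonempty blocks; $\mathcal{A}\sqsubseteq\mathcal{B}$ means every block of $\mathcal{A}$ is contained in a block of $\mathcal{B}$; $\mathsf{CC}(H)$ is the partition of $V(H)$ into vertex sets of connected components. For a maximal clique $X$ of a chordal graph $H$, $H$ is an $X$-interval graph if there is an ordering $(K_1,\dots,K_k,X)$ of all maximal cliques of $H$ ending with $X$ such that for each vertex the cliques containing it are consecutive. For $X\subseteq V(G)$, $Y\subseteq X$, a partition $\mathcal{B}$ of $V(G)\setminus X$, a block $B$ and $x\in Y$: $N(x)$ is minimal in $B$ for $Y$ if $N(x)\cap B\subseteq N(y)$ for all $y\in Y$; $x$ is removable from $Y$ for $\mathcal{B}$ if $N(x)$ is minimal for $Y$ in at least $|\mathcal{B}|-1$ blocks. A good partition of $G$ is a pair $(X,\mathcal{B})$, $X$ a maximal clique, $\mathcal{B}$ a partition of $V(G)\setminus X$, with (i) $\mathsf{CC}(G-X)\sqsubseteq\mathcal{B}$; (ii) $G[X\cup B]$ is an $X$-interval graph for all $B\in\mathcal{B}$; (iii) there is an ordering $(x_1,\dots,x_t)$ of $X$ with each $x_i$ removable from $\{x_i,\dots,x_t\}$ for $\mathcal{B}$. For $W\subseteq X$, $x\in W$ and a partition $\mathcal{A}$ of $V(G)\setminus X$, $\mathsf{notmin}(x,W,\mathcal{A})$ is the union of the blocks of $\mathcal{A}$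 in which $N(x)$ is not minimal for $W$. Algorithm GP on input $G$: if $G$ is not chordal, return ''no''. Otherwise, for each maximal clique $X$ of $G$: (a) if some component $C$ of $G-X$ has $G[X\cup C]$ not an $X$-interval graph, go to the next $X$; (b) set $\mathcal{A}\leftarrow\mathsf{CC}(G-X)$, $W\leftarrow X$; (c) while $W\neq\emptyset$: if there exists $w\in W$ such that $G[X\cup\mathsf{notmin}(w,W,\mathcal{A})]$ is an $X$-interval graph, choose any such $w$, replace the blocks of $\mathcal{A}$ contained in $\mathsf{notmin}(w,W,\mathcal{A})$ by their union, and set $W\leftarrow W\setminus\{w\}$; otherwise leave the while loop; (d) if $W=\emptyset$, return $(X,\mathcal{A})$. If no maximal clique led to a return, return ''no''. *)

(* Defs.v *)
(* Graphs: a finite simple graph is a symmetric irreflexive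
   relation [e : rel T] on a finite type [T] of vertices.  Induced subgraphs
   G[S] are represented by their vertex subset [S : {set T}]. *)
From mathcomp Require Import all_boot.
Set Implicit Arguments. Unset Strict Implicit. Unset Printing Implicit Defensive.

Section Graphs.
Variables (T : finType) (e : rel T).

Definition nbhd (x : T) : {set T} := [set y | e x y].

Definition chordal_on (S : {set T}) : Prop :=
  forall c : seq T, uniq c -> 4 <= size c -> {subset c <= S} -> cycle e c ->
    exists u v, [/\ u \in c, v \in c, u != v &
                    [&& v != next c u, u != next c v & e u v]].

Definition clique_on (S K : {set T}) : Prop :=
  K \subset S /\ {in K &, forall x y, x != y -> e x y}.

Definition maxclique_on (S K : {set T}) : Prop :=
  clique_on S K /\ forall K', clique_on S K' -> K \subset K' -> K' = K.

(* For a maximal clique X of the chordal graph H = G[S]: H is an X-interval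
   graph iff there is an ordering (K_1, ..., K_k, X) of all maximal cliques
   of H ending with X such that for every vertex the cliques containing it
   are consecutive. *)
Definition Xinterval (S X : {set T}) : Prop :=
  [/\ chordal_on S, maxclique_on S X &
    exists s : seq {set T},
      [/\ uniq (rcons s X),
          (forall K, K \in rcons s X <-> maxclique_on S K) &
          forall v i j k, v \in S -> i <= j -> j <= k -> k < size (rcons s X) ->
            v \in nth set0 (rcons s X) i -> v \in nth set0 (rcons s X) k ->
            v \in nth set0 (rcons s X) j]].

Definition induced_rel (S : {set T}) : rel T :=
  [rel x y | [&& e x y, x \in S & y \in S]].

Definition CC (S : {set T}) : {set {set T}} :=
  [set [set y in S | connect (induced_rel S) x y] | x in S].

Definition refines (A B : {set {set T}}) : Prop :=
  forall a, a \in A -> exists2 b, b \in B & a \subset b.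

Definition nmin (Y : {set T}) (B : {set T}) (x : T) : bool :=
  [forall y in Y, (nbhd x :&: B) \subset nbhd y].

Definition removable (BB : {set {set T}}) (Y : {set T}) (x : T) : bool :=
  #|BB| - 1 <= #|[set B in BB | nmin Y B x]|.

Fixpoint removable_seq (BB : {set {set T}}) (s : seq T) : Prop :=
  match s with
  | [::] => True
  | x :: s' => removable BB [set y in x :: s'] x /\ removable_seq BB s'
  end.

Definition good_partition (X : {set T}) (BB : {set {set T}}) : Prop :=
  [/\ maxclique_on setT X,
      partition BB (~: X),
      refines (CC (~: X)) BB,
      (forall B, B \in BB -> Xinterval (X :|: B) X) &
      exists s : seq T, [/\ uniq s, [set x in s] = X & removable_seq BB s]].

Definition notmin (x : T) (W : {set T}) (A : {set {set T}}) : {set T} :=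
  \bigcup_(B in A | ~~ nmin W B x) B.

(* replace the blocks of A contained in N by their union
   (N is a union of blocks of A) *)
Definition merge_blocks (A : {set {set T}}) (N : {set T}) : {set {set T}} :=
  [set B in A | ~~ (B \subset N)] :|: (if N == set0 then set0 else [set N]).

(* Runs of the while loop of step (c) for a fixed maximal clique X:
   [gp_loop X A W A'] means that starting from the current pair (A, W)
   some sequence of admissible choices of w leads to W = set0 with final
   partition A'. *)
Inductive gp_loop (X : {set T}) :
    {set {set T}} -> {set T} -> {set {set T}} -> Prop :=
  | gp_loop_done (A : {set {set T}}) : gp_loop X A set0 A
  | gp_loop_step (A : {set {set T}}) (W : {set T}) (w : T) (A' : {set {set T}}) :
      w \in W ->
      Xinterval (X :|: notmin w W A) X ->
      gp_loop X (merge_blocks A (notmin w W A)) (W :\ w) A' ->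
      gp_loop X A W A'.

(* Algorithm GP, run on G, may return (X, A): G is chordal, X is a maximal
   clique of G passing step (a), and some run of the loop (b)-(c) ends with
   W empty and partition A.  (Which maximal clique is tried first is
   immaterial: any X whose run succeeds can be the returned one.) *)
Definition GP_returns (X : {set T}) (A : {set {set T}}) : Prop :=
  [/\ chordal_on setT,
      maxclique_on setT X,
      (forall C, C \in CC (~: X) -> Xinterval (X :|: C) X) &
      gp_loop X (CC (~: X)) X A].

End Graphs.

(* Main.v *)
Require Import Defs.
From mathcomp Require Import all_boot.

Section Aux.
Variables (T : finType) (e : rel T).
Hypothesis e_sym : symmetric e.

Lemma CC_partition (S : {set T}) : partition (CC e S) S.
Proof.
apply: equivalence_partitionP => x y z _ _ _.
have hs : connect_sym (induced_rel e S).
  apply: sym_connect_sym => a b; rewrite /induced_rel /= [e a b]e_sym.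
  by case: (a \in S); case: (b \in S); rewrite /= ?andbT ?andbF.
split; first exact: connect0.
move=> Hxy; apply/idP/idP => H.
  by apply: connect_trans H; rewrite hs.
exact: connect_trans Hxy H.
Qed.

Lemma trivD {P : {set {set T}}} : trivIset P ->
  forall {A B : {set T}}, A \in P -> B \in P -> A != B -> [disjoint A & B].
Proof. by move/trivIsetP. Qed.

Lemma merge_partition (P : {set {set T}}) (D N : {set T}) :
  partition P D -> N \subset D ->
  (forall B, B \in P -> B \subset N \/ [disjoint B & N]) ->
  partition (merge_blocks P N) D /\ refines P (merge_blocks P N).
Proof.
case/and3P => /eqP cov triv n0 ND hB.
have memN : N != set0 -> N \in merge_blocks P N.
  by move=> /negbTE h; rewrite /merge_blocks h !inE eqxx orbT.
have memB : forall B, B \in merge_blocks P N ->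
   (B \in P /\ ~~ (B \subset N)) \/ (B = N /\ N != set0).
  move=> B; rewrite /merge_blocks inE; case/orP.
    by rewrite inE; case/andP => h1 h2; left.
  case: ifP => [_|/negbT h]; first by rewrite inE.
  by rewrite inE => /eqP ->; right.
split; last first.
  move=> B BP; case: (boolP (B \subset N)) => h.
    exists N => //; apply: memN; apply: contraNneq n0 => N0.
    by move: h; rewrite N0 subset0 => /eqP <-.
  by exists B => //; rewrite /merge_blocks !inE BP h.
apply/and3P; split.
- rewrite eqEsubset; apply/andP; split.
    apply/bigcupsP => B /memB [[BP _]|[-> _]] //.
    by rewrite -cov; apply: bigcup_sup.
  rewrite -cov; apply/subsetP => x /bigcupP [B BP xB].
  case: (boolP (B \subset N)) => h.
    apply/bigcupP; exists N; last by apply: (subsetP h).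
    by apply: memN; apply/set0Pn; exists x; apply: (subsetP h).
  by apply/bigcupP; exists B => //; rewrite /merge_blocks !inE BP h.
- apply/trivIsetP => B1 B2 /memB h1 /memB h2 ne.
  case: h1 => [[B1P B1N]|[E1 _]]; case: h2 => [[B2P B2N]|[E2 _]].
  + exact: (trivD triv B1P B2P ne).
  + by rewrite E2; case: (hB _ B1P) => // h; rewrite h in B1N.
  + by rewrite E1 disjoint_sym; case: (hB _ B2P) => // h; rewrite h in B2N.
  + by rewrite E1 E2 eqxx in ne.
- apply/negP => /memB [[h _]|[h1 h2]]; first by rewrite h in n0.
  by rewrite -h1 eqxx in h2.
Qed.

Lemma refines_trans (P Q R : {set {set T}}) :
  refines P Q -> refines Q R -> refines P R.
Proof.
move=> h1 h2 a aP; case: (h1 a aP) => b bQ ab; case: (h2 b bQ) => c cR bc.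
by exists c => //; apply: subset_trans bc.
Qed.

Lemma loop_inv (X : {set T}) A W A' :
  gp_loop e X A W A' -> partition A (~: X) ->
  (forall B, B \in A -> Xinterval e (X :|: B) X) ->
  [/\ partition A' (~: X), refines A A',
      (forall B, B \in A' -> Xinterval e (X :|: B) X) &
      exists s : seq T, [/\ uniq s, [set x in s] = W & removable_seq e A' s]].
Proof.
elim => {A W A'}.
  move=> A pA hA; split => //; first by move=> a aA; exists a.
  by exists [::]; split => //; apply/setP => x; rewrite !inE.
move=> A W w A' wW XN _ IH pA hA.
set N := notmin e w W A in XN IH *.
have pA' := pA; case/and3P: pA' => /eqP cov triv n0.
have NB : forall B, B \in A -> ~~ nmin e W B w -> B \subset N.
  by move=> B BA h; rewrite /N /notmin; apply: (bigcup_sup B); rewrite BA h.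
have hB : forall B, B \in A -> B \subset N \/ [disjoint B & N].
  move=> B BA; case: (boolP (nmin e W B w)) => h; last by left; apply: NB.
  right; rewrite /N /notmin; apply/bigcup_disjointP.
  move=> B2 /andP [B2A h2]; apply: (trivD triv BA B2A).
  by apply/eqP => E; rewrite -E h in h2.
have ND : N \subset ~: X.
  by rewrite -cov; apply/bigcupsP => B /andP [BA _]; apply: bigcup_sup.
case: (@merge_partition A (~: X) N pA ND hB) => pA1 rA1.
have hA1 : forall B, B \in merge_blocks A N -> Xinterval e (X :|: B) X.
  move=> B; rewrite /merge_blocks inE; case/orP; first by rewrite inE; case/andP => BA _; apply: hA.
  by case: ifP => _; rewrite inE // => /eqP ->.
case: (IH pA1 hA1) => pA' rA' hA' [s [us ss rs]].
split => //; first exact: refines_trans rA1 rA'.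
have wS : w \notin s by rewrite -(in_set (fun x => x \in s)) ss !inE eqxx.
have sW : [set y in w :: s] = W.
  apply/setP => x; have := f_equal (fun S : {set T} => x \in S) ss => /=.
  rewrite !inE => ->; case: eqP => [->|_] //=.
exists (w :: s); split => //=; first by rewrite wS.
split => //; rewrite sW /removable.
case/and3P: pA' => /eqP cov' triv' n0'.
have good : forall B', B' \in A' -> [disjoint B' & N] -> nmin e W B' w.
  move=> B' B'A dis; apply/forallP => y; apply/implyP => yW.
  apply/subsetP => z; rewrite inE => /andP [zw zB'].
  have : z \in ~: X by rewrite -cov'; apply/bigcupP; exists B'.
  rewrite -cov => /bigcupP [B BA zB].
  case: (boolP (nmin e W B w)) => h.
    by move/forallP: h => /(_ y); rewrite yW /= => /subsetP; apply; rewrite inE zw.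
  have := NB _ BA h => /subsetP /(_ z zB) zN.
  by move: dis; rewrite disjoint_sym => /disjointFr /(_ zN); rewrite zB'.
case: (eqVneq N set0) => N0.
  apply: (leq_trans (leq_subr 1 _)); apply: subset_leq_card.
  apply/subsetP => B' B'A; rewrite inE B'A /=; apply: good => //.
  by rewrite N0 -setI_eq0 setI0.
have NA1 : N \in merge_blocks A N by rewrite /merge_blocks (negbTE N0) !inE eqxx orbT.
case: (rA' N NA1) => B0 B0A NB0.
rewrite (cardsD1 B0 A') B0A add1n subSS subn0; apply: subset_leq_card.
apply/subsetP => B'; rewrite !inE => /andP [ne B'A]; rewrite B'A /=.
apply: good => //; have := trivD triv' B'A B0A ne.
by move=> d; apply: disjointWr NB0 d.
Qed.

End Aux.

Theorem lemma3 (T : finType) (e : rel T) (e_sym : symmetric e)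
    (e_irr : irreflexive e) (X : {set T}) (A : {set {set T}}) :
  GP_returns e X A -> good_partition e X A.
Proof.
case => _ mX hC loop.
have pC := @CC_partition T e e_sym (~: X).
case: (@loop_inv T e X _ _ _ loop pC hC) => pA rA hA hs.
split => //; apply: refines_trans rA; by move=> a aC; exists a.
Qed.
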